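(* Let $q\ge 3$ and let $n$ be a positive even integer. There exists a quasi-complementary Lee metric Gray code of $q$-ary $n$-tuples.
   Context: Lee distance between $v,u\in\mathbb{Z}_q^n$ is $\sum_{i}\min\{|v_i-u_i|,q-|v_i-u_i|\}$ (entries regarded as integers in $\{0,\ldots,q-1\}$). A quasi-complementary Lee metric Gray code of $q$-ary $n$-tuples is an ordering $G(0),\ldots,G(q^n-1)$ of all words of $\mathbb{Z}_q^n$ such that consecutive words $G(i),G(i+1)$ ($0\le i<q^n-1$) have Lee distance $1$ and $G((i+q^{n-1})\bmod q^n)=G(i)+(1,1,\ldots,1)$ for all $i$, with addition in $\mathbb{Z}_q^n$. *)

(* Defs.v *)
From mathcomp Require Import all_boot.
Set Implicit Arguments. Unset Strict Implicit. Unset Printing Implicit Defensive.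

Definition word (q n : nat) := {ffun 'I_n -> 'I_q}.

Definition lee1 (q a b : nat) : nat :=
  let d := if a <= b then b - a else a - b in minn d (q - d).

Definition lee_dist (q n : nat) (v u : word q n) : nat :=
  \sum_(i < n) lee1 q (v i) (u i).

Definition is_plus_ones (q n : nat) (v u : word q n) : Prop :=
  forall j : 'I_n, nat_of_ord (u j) = (nat_of_ord (v j) + 1) %% q.

Definition quasi_compl_lee_gray (q n : nat) (G : nat -> word q n) : Prop :=
  [/\ (forall v : word q n, exists2 i, i < q ^ n & G i = v),
      {in [pred i | i < q ^ n] &, injective G},
      (forall i, i.+1 < q ^ n -> lee_dist (G i) (G i.+1) = 1) &
      (forall i, i < q ^ n -> is_plus_ones (G i) (G ((i + q ^ n.-1) %% q ^ n)))].

(* Main.v *)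
Require Import Defs.
From mathcomp Require Import all_boot zify.
Set Implicit Arguments. Unset Strict Implicit. Unset Printing Implicit Defensive.

Section Comb.
Variable q : nat.
Hypothesis hq : 1 < q.

Lemma q_gt0 : 0 < q. Proof. by apply: ltnW. Qed.

Definition step (a b : nat) := (b == (a + 1) %% q) || (a == (b + 1) %% q).

Fixpoint adj (u v : seq nat) : bool :=
  match u, v with
  | a :: u', b :: v' => ((a == b) && adj u' v') || (step a b && (u' == v'))
  | _, _ => false
  end.

Lemma adj_size u v : adj u v -> size u = size v.
Proof.
elim: u v => [|a u IH] [|b v] //= /orP[/andP[_ /IH ->]|/andP[_ /eqP ->]] //.
Qed.

Lemma adj_catl w u v : adj u v -> adj (w ++ u) (w ++ v).
Proof. by elim: w => //= a w IH /IH ->; rewrite eqxx. Qed.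

Lemma adj_catr w u v : adj u v -> adj (u ++ w) (v ++ w).
Proof.
elim: u v => [|a u IH] [|b v] //= /orP[/andP[-> /IH ->]|/andP[-> /eqP ->]] //.
by rewrite eqxx orbT.
Qed.

Lemma adj_rcons_step x a b : step a b -> adj (rcons x a) (rcons x b).
Proof. by elim: x => [|c x IH] /= H; [rewrite H orbT | rewrite eqxx IH]. Qed.

Definition addm t a := (a + t) %% q.

Lemma step_addm t a b : step a b -> step (addm t a) (addm t b).
Proof.
rewrite /step /addm => /orP[/eqP->|/eqP->]; apply/orP; [left|right];
  by rewrite modnDml modnDml addnAC.
Qed.

Lemma adj_map t u v : adj u v -> adj (map (addm t) u) (map (addm t) v).
Proof.
elim: u v => [|a u IH] [|b v] //= /orP[/andP[/eqP-> /IH ->]|/andP[/step_addm -> /eqP ->]] //.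
 by rewrite eqxx.
by rewrite eqxx orbT.
Qed.

Lemma lee1_same a : lee1 q a a = 0.
Proof. by rewrite /lee1 /= leqnn subnn min0n. Qed.

Lemma lee1C a b : lee1 q a b = lee1 q b a.
Proof.
rewrite /lee1; case: ltngtP => // ->; by rewrite ?leqnn.
Qed.

Lemma lee1_succ a : a < q -> lee1 q a ((a + 1) %% q) = 1.
Proof.
move=> aq; rewrite /lee1 /=.
have [H|H] : a.+1 < q \/ a.+1 = q by lia.
- rewrite modn_small; last by lia.
  have -> : (a <= a + 1) = true by lia.
  have -> : a + 1 - a = 1 by lia.
  lia.
- rewrite addn1 H modnn.
  have -> : (a <= 0) = false by lia.
  rewrite subn0; lia.
Qed.

Lemma lee1_step a b : a < q -> b < q -> step a b -> lee1 q a b = 1.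
Proof.
move=> aq bq /orP[/eqP->|/eqP->]; first by rewrite lee1_succ.
by rewrite lee1C lee1_succ.
Qed.

Lemma succ_neq a : a < q -> (a + 1) %% q != a.
Proof.
move=> aq; have [H|H] : a.+1 < q \/ a.+1 = q by lia.
- rewrite modn_small; lia.
- rewrite addn1 H modnn; lia.
Qed.

Lemma step_neq a b : step a b -> a < q -> b < q -> a != b.
Proof.
move=> /orP[/eqP->|/eqP->] aq bq; first by rewrite eq_sym succ_neq.
by rewrite succ_neq.
Qed.

Lemma lee_sum_adj u v : all (fun a => a < q) u -> all (fun a => a < q) v ->
  adj u v -> \sum_(j < size u) lee1 q (nth 0 u j) (nth 0 v j) = 1.
Proof.
elim: u v => [|a u IH] [|b v] //= /andP[aq uq] /andP[bq vq].
rewrite big_ord_recl /=.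
case/orP=> [/andP[/eqP <- H]|/andP[st /eqP E]].
- by rewrite lee1_same IH.
- rewrite lee1_step // E big1 // => j _; exact: lee1_same.
Qed.

Lemma path_iota (T : Type) (e : rel T) (f : nat -> T) k a :
  (forall i, i < k -> e (f (a + i)) (f (a + i).+1)) ->
  path e (f a) (map f (iota a.+1 k)).
Proof.
elim: k a => [|k IH] a H //=.
apply/andP; split; first by have := H 0; rewrite addn0; apply.
apply: IH => i ik; have := H i.+1; rewrite addSnnS; apply; done.
Qed.

Lemma last_iota a N : last a (iota a.+1 N) = a + N.
Proof. by elim: N a => [|N IH] a /=; [rewrite addn0 | rewrite IH addnS]. Qed.

Lemma cycle_iota (T : Type) (e : rel T) (f : nat -> T) N :
  (forall i, i.+1 < N -> e (f i) (f i.+1)) -> 0 < N -> e (f N.-1) (f 0) ->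
  cycle e (map f (iota 0 N)).
Proof.
case: N => [|N] // H _ HN /=.
rewrite rcons_path; apply/andP; split.
- by apply: path_iota => i iN; apply: H; rewrite add0n.
- rewrite last_map.
  suff -> : forall a, last a (iota a.+1 N) = a + N by rewrite add0n.
  elim: N {H HN} => [|N IH] a /=; first by rewrite addn0.
  by rewrite IH addnS.
Qed.

Lemma divmodq k a : a < q -> (k * q + a) %/ q = k /\ (k * q + a) %% q = a.
Proof.
move=> aq; split; first by rewrite divnMDl ?q_gt0 // divn_small // addn0.
by rewrite modnMDl modn_small.
Qed.

Definition cw z := [:: z %/ q; (z %/ q + q - z %% q) %% q].
Definition C := map cw (iota 0 (q * q)).

Lemma cw_km k a : a < q -> cw (k * q + a) = [:: k; (k + q - a) %% q].
Proof. by move=> aq; rewrite /cw; case: (divmodq k aq) => -> ->. Qed.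

Lemma decomp z : exists k a, a < q /\ z = k * q + a.
Proof. by exists (z %/ q), (z %% q); rewrite ltn_pmod ?q_gt0 // -divn_eq. Qed.

Lemma size_C : size C = q * q.
Proof. by rewrite size_map size_iota. Qed.

Lemma nth_C z : z < q * q -> nth [::] C z = cw z.
Proof. by move=> zq; rewrite (nth_map 0) ?size_iota // nth_iota. Qed.

Lemma C_valid w : w \in C -> size w = 2 /\ all (fun a => a < q) w.
Proof.
case/mapP => z; rewrite mem_iota add0n => zq ->; split => //=.
apply/and3P; split => //; [by rewrite ltn_divLR ?q_gt0 | by rewrite ltn_pmod ?q_gt0].
Qed.

Lemma kq_lt k a : a < q -> k * q + a < q * q -> k < q.
Proof. move=> aq H; rewrite -(ltn_pmul2r q_gt0); lia. Qed.

Lemma uniq_C : uniq C.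
Proof.
rewrite map_inj_in_uniq ?iota_uniq // => z z'.
rewrite !mem_iota !add0n => zq z'q.
case: (decomp z) => k [a [aq ->]]; case: (decomp z') => k' [a' [a'q ->]].
rewrite !cw_km // => -[<- E].
have : (k + q - a' + a) %% q = (k + q - a' + a') %% q.
  by rewrite -modnDml -E modnDml subnK ?subnK //; lia.
by move/eqP; rewrite eqn_modDl !modn_small // => /eqP ->.
Qed.

Lemma mem_C x y : x < q -> y < q -> [:: x; y] \in C.
Proof.
move=> xq yq; apply/mapP; exists (x * q + (x + q - y) %% q).
  rewrite mem_iota add0n.
  have : (x + q - y) %% q < q by rewrite ltn_pmod ?q_gt0.
  move=> H; have : x.+1 * q <= q * q by rewrite leq_mul2r xq orbT.
  rewrite mulSn; lia.
rewrite cw_km ?ltn_pmod ?q_gt0 //; congr [:: _; _].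
have [H|H] : y <= x \/ x < y by lia.
- rewrite (_ : x + q - y = (x - y) + q); last by lia.
  rewrite modnDr (@modn_small (x - y)); last by lia.
  rewrite (_ : x + q - (x - y) = y + q); last by lia.
  by rewrite modnDr modn_small.
- rewrite (@modn_small (x + q - y)); last by lia.
  rewrite (_ : x + q - (x + q - y) = y); last by lia.
  by rewrite modn_small.
Qed.

Lemma cw0 : cw 0 = [:: 0; 0].
Proof. by rewrite /cw div0n mod0n add0n subn0 modnn. Qed.

Lemma cwq : cw q = [:: 1; 1].
Proof.
rewrite /cw divnn modnn q_gt0 subn0 addnC modnDl modn_small //.
Qed.

Lemma adj2_snd k x y : step x y -> adj [:: k; x] [:: k; y].
Proof. by move=> H; apply/orP; left; rewrite eqxx /= H eqxx orbT. Qed.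

Lemma adj2_fst x y z : step x y -> adj [:: x; z] [:: y; z].
Proof. by move=> H; apply/orP; right; rewrite H eqxx. Qed.

Lemma cycle_C : cycle adj C.
Proof.
apply: cycle_iota.
- move=> z zq; case: (decomp z) => k [a [aq E]]; rewrite E.
  have [H|H] : a.+1 < q \/ a.+1 = q by lia.
  + rewrite -addnS !cw_km //; apply: adj2_snd; apply/orP; right.
    rewrite modnDml; apply/eqP; congr (_ %% _); lia.
  + have -> : (k * q + a).+1 = k.+1 * q + 0 by rewrite mulSn; lia.
    rewrite !cw_km ?q_gt0 //.
    have kq : k.+1 < q by apply: (@kq_lt _ 0); rewrite ?q_gt0 // addn0 mulSn; lia.
    have -> : k + q - a = k.+1 by lia.
    rewrite subn0 addnC modnDl; apply: adj2_fst.
    by rewrite /step addn1 modn_small // eqxx.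
- by rewrite muln_gt0 q_gt0.
- have -> : (q * q).-1 = (q.-1) * q + q.-1.
    rewrite -{1}(prednK q_gt0) mulSn; have := q_gt0; lia.
  rewrite cw_km; last by rewrite prednK ?q_gt0.
  rewrite cw0.
  have -> : q.-1 + q - q.-1 = q by lia.
  rewrite modnn; apply: adj2_fst.
  by rewrite /step addn1 prednK ?q_gt0 // modnn eqxx.
Qed.

Lemma step_sym a b : step a b = step b a.
Proof. by rewrite /step orbC. Qed.

Lemma adj_sym u v : adj u v = adj v u.
Proof.
elim: u v => [|a u IH] [|b v] //=.
by rewrite eq_sym IH step_sym [v == u]eq_sym.
Qed.

Lemma rot_hd (T : Type) (x0 : T) n l : n < size l -> nth x0 (rot n l) 0 = nth x0 l n.
Proof.
move=> nl; rewrite /rot nth_cat size_drop subn_gt0 nl.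
by rewrite nth_drop addn0.
Qed.

Lemma rot_lst (T : Type) (x0 : T) n l : 0 < n -> n <= size l -> last x0 (rot n l) = nth x0 l n.-1.
Proof.
case: n => // n _ nl; rewrite /rot last_cat (take_nth x0 nl) last_rcons //.
Qed.

Lemma rev_hd (T : Type) (x0 : T) l : nth x0 (rev l) 0 = last x0 l.
Proof.
case: l => [|a l] //; rewrite nth_rev //= subSS subn0.
by rewrite -[last _ _](nth_last x0 (a :: l)).
Qed.

Lemma rev_lst (T : Type) (x0 : T) l : 0 < size l -> last x0 (rev l) = nth x0 l 0.
Proof.
case: l => [|a l] //= _; by rewrite rev_cons last_rcons.
Qed.

Definition fwd s := rot s C.
Definition bwd s := rev (rot s.+1 C).
Definition sidx j := if j <= q then j else if odd (j - q) then q.-1 else q.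
Definition D j := if (j < q) || odd (j - q) then bwd (sidx j) else fwd (sidx j).

Lemma q_lt_qq : q < q * q.
Proof. by rewrite -{1}(muln1 q) ltn_pmul2l ?q_gt0. Qed.

Lemma D_perm j : D j =i C.
Proof. by move=> x; rewrite /D /bwd /fwd; case: ifP => _; rewrite ?mem_rev mem_rot. Qed.

Lemma D_uniq j : uniq (D j).
Proof. by rewrite /D /bwd /fwd; case: ifP => _; rewrite ?rev_uniq rot_uniq uniq_C. Qed.

Lemma D_size j : size (D j) = q * q.
Proof. by rewrite /D /bwd /fwd; case: ifP => _; rewrite ?size_rev size_rot size_C. Qed.

Lemma D_cycle j : cycle adj (D j).
Proof.
rewrite /D /bwd /fwd; case: ifP => _; rewrite ?rev_cycle rot_cycle ?cycle_C //.
rewrite (@eq_cycle _ _ adj) ?cycle_C // => x y; exact: adj_sym.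
Qed.

Lemma bwd_ends s : s.+1 < q * q ->
  nth [::] (bwd s) 0 = nth [::] C s /\ last [::] (bwd s) = nth [::] C s.+1.
Proof.
move=> sq; rewrite /bwd rev_hd rev_lst; last by rewrite size_rot size_C; lia.
rewrite rot_hd ?rot_lst ?size_C //; exact: ltnW.
Qed.

Lemma fwd_ends s : 0 < s -> s < q * q ->
  nth [::] (fwd s) 0 = nth [::] C s /\ last [::] (fwd s) = nth [::] C s.-1.
Proof.
move=> s0 sq; rewrite /fwd rot_hd ?rot_lst ?size_C //; exact: ltnW.
Qed.

Lemma D_ends j : nth [::] (D j) 0 = nth [::] C (sidx j) /\
                 last [::] (D j) = nth [::] C (sidx j.+1).
Proof.
have qq := q_lt_qq.
have [jq|jq] := ltnP j q.
- have sj : sidx j = j by rewrite /sidx (ltnW jq).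
  have -> : D j = bwd j by rewrite /D jq sj.
  have -> : sidx j.+1 = j.+1 by rewrite /sidx jq.
  rewrite sj; apply: bwd_ends; by apply: leq_ltn_trans qq.
- have [E|E] := eqVneq j q.
  + subst j.
    have sj : sidx q = q by rewrite /sidx leqnn.
    have -> : D q = fwd q by rewrite /D ltnn subnn sj.
    have -> : sidx q.+1 = q.-1 by rewrite /sidx ltnn subSn // subnn.
    rewrite sj; exact: (fwd_ends q_gt0 qq).
  + have jq' : q < j by rewrite ltn_neqAle eq_sym E.
    have oS : odd (j.+1 - q) = ~~ odd (j - q) by rewrite subSn ?(ltnW jq').
    have -> : sidx j.+1 = if odd (j - q) then q else q.-1.
      by rewrite /sidx ltnNge ltnW // oS; case: odd.
    have sj : sidx j = if odd (j - q) then q.-1 else q.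
      by rewrite /sidx leqNgt jq'.
    have -> : D j = if odd (j - q) then bwd q.-1 else fwd q.
      by rewrite /D ltnNge (ltnW jq') /= sj; case: odd.
    rewrite sj; case: odd.
    * by have := @bwd_ends q.-1; rewrite prednK ?q_gt0 //; apply.
    * exact: (fwd_ends q_gt0 qq).
Qed.

Lemma D_cons j : exists rest, D j = nth [::] C (sidx j) :: rest /\
  last (nth [::] C (sidx j)) rest = nth [::] C (sidx j.+1) /\
  path adj (nth [::] C (sidx j)) rest.
Proof.
case: (D_ends j) => <- <-; have := D_cycle j; have := D_size j.
case: (D j) => [|x rest] /=; first by move=> E; move: (muln_gt0 q q); rewrite -E q_gt0.
move=> _; rewrite rcons_path => /andP[H _]; by exists rest.
Qed.

Fixpoint glue j (K : seq (seq nat)) : seq (seq nat) :=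
  if K is u :: K' then map (cat u) (D j) ++ glue j.+1 K' else [::].

Lemma size_glue j K : size (glue j K) = size K * (q * q).
Proof. by elim: K j => //= u K IH j; rewrite size_cat size_map D_size IH mulSn. Qed.

Lemma mem_glue_inv j K w : w \in glue j K -> exists u c, [/\ u \in K, c \in C & w = u ++ c].
Proof.
elim: K j => //= u K IH j; rewrite mem_cat => /orP[/mapP[c cD ->]|/IH[u' [c [uK cC ->]]]].
- by exists u, c; split => //; rewrite ?inE ?eqxx // -(D_perm j).
- by exists u', c; split => //; rewrite inE uK orbT.
Qed.

Lemma mem_glue j K u c : u \in K -> c \in C -> u ++ c \in glue j K.
Proof.
elim: K j => //= u' K IH j; rewrite inE mem_cat => /orP[/eqP->|uK] cC.
- by rewrite map_f ?D_perm.
- by rewrite IH ?orbT.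
Qed.

Lemma uniq_glue j K m : uniq K -> (forall u, u \in K -> size u = m) -> uniq (glue j K).
Proof.
elim: K j => //= u K IH j /andP[uK uqK] Hs.
rewrite cat_uniq IH ?andbT; last by move=> v vK; apply: Hs; rewrite inE vK orbT.
- rewrite map_inj_uniq ?D_uniq /=; last first.
    by move=> x y /eqP; rewrite eqseq_cat // eqxx => /eqP.
  apply/hasPn => w /mem_glue_inv [u' [c [u'K cC ->]]].
  apply/negP => /mapP [c' _ E].
  move/eqP: E; rewrite eqseq_cat; last by rewrite (Hs u) ?inE ?eqxx // (Hs u') // inE u'K orbT.
  by case/andP => /eqP E _; move: uK; rewrite -E u'K.
- by [].
Qed.

Lemma path_glue K j u : path adj u K -> path adj (u ++ nth [::] C (sidx j)) (glue j K).
Proof.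
elim: K j u => //= u' K IH j u /andP[uu' pK].
case: (D_cons j) => rest [-> [lst pr]] /=.
rewrite adj_catr //= cat_path; apply/andP; split.
- rewrite path_map; apply: sub_path pr => x y; exact: adj_catl.
- by rewrite last_map lst; apply: IH.
Qed.

Lemma last_glue K j u x : last x (glue j (u :: K)) = last u K ++ nth [::] C (sidx (j + size K).+1).
Proof.
elim: K j u x => [|u' K IH] j u x /=.
- case: (D_cons j) => rest [-> [lst _]] /=.
  by rewrite cats0 last_map lst addn0.
- rewrite last_cat IH /= addnS //.
Qed.

Lemma sorted_glue K j u : path adj u K ->
  sorted adj (glue j (u :: K)).
Proof.
move=> pK /=; case: (D_cons j) => rest [-> [lst pr]] /=.
rewrite cat_path; apply/andP; split.
- rewrite path_map; apply: sub_path pr => x y; exact: adj_catl.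
- by rewrite last_map lst; apply: path_glue.
Qed.

Definition K1 := map (fun j => [:: (q - j) %% q]) (iota 0 q).

Definition valid m (w : seq nat) := (size w == m) && all (fun a => a < q) w.

Fixpoint KK k := if k is k'.+1 then glue 0 (KK k') else K1.

Lemma qmj j : j < q -> (q - j) %% q = if j == 0 then 0 else q - j.
Proof.
move=> jq; case: eqP => [->|j0]; first by rewrite subn0 modnn.
by rewrite modn_small //; lia.
Qed.

Lemma sidx_pow m : 0 < m -> sidx (q ^ m) = q.
Proof.
move=> m0; rewrite /sidx.
have qm : q <= q ^ m by rewrite -{1}(prednK m0) expnS leq_pmulr // expn_gt0 q_gt0.
case: ifP => H; first by apply/eqP; rewrite eqn_leq H qm.
by rewrite oddB // oddX eqn0Ngt m0 /= addbb.
Qed.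

Lemma KK_inv k : let m := k.*2.+1 in
  [/\ size (KK k) = q ^ m /\ uniq (KK k),
      (forall w, w \in KK k -> valid m w),
      (forall w, valid m w -> w \in KK k),
      sorted adj (KK k) &
      last [::] (KK k) = map (addm 1) (nth [::] (KK k) 0)].
Proof.
elim: k => [|k [[IH1 IH2] IH3 IH4 IH5 IH6]] m.
- rewrite /m /=; split; first split.
  + by rewrite size_map size_iota expn1.
  + rewrite map_inj_in_uniq ?iota_uniq // => x y; rewrite !mem_iota !add0n => xq yq [].
    rewrite !qmj //; case: eqP; case: eqP; lia.
  + move=> w /mapP [j _ ->]; by rewrite /valid /= ltn_pmod ?q_gt0.
  + case=> [|x [|y w]] //; rewrite /valid /= andbT => xq.
    apply/mapP; exists ((q - x) %% q); first by rewrite mem_iota add0n ltn_pmod ?q_gt0.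
    rewrite qmj ?ltn_pmod ?q_gt0 //; congr [:: _].
    case: (eqVneq x 0) => [->|x0]; first by rewrite subn0 modnn.
    rewrite modn_small; last by lia.
    case: eqP => H; lia.
  + have E : iota 0 q = 0 :: iota 1 q.-1 by rewrite -{1}(prednK q_gt0).
    rewrite /K1 E /=.
    have := @path_iota _ adj (fun j => [:: (q - j) %% q]) q.-1 0; apply.
    move=> i iq; rewrite add0n /= eqxx andbT.
    apply/orP; right; apply/orP; right.
    rewrite modnDml; apply/eqP; congr (_ %% _); lia.
  + have E : iota 0 q = 0 :: iota 1 q.-1 by rewrite -{1}(prednK q_gt0).
    rewrite /K1 E /= last_map last_iota add0n /addm /=.
    rewrite subn0 modnn add0n; congr [:: _].
    have -> : q - q.-1 = 1 by have := q_gt0; lia.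
    done.
- have Hs : forall u, u \in KK k -> size u = k.*2.+1.
    by move=> u /IH3 /andP[/eqP].
  rewrite /=; split; first split.
  + rewrite size_glue IH1 /m doubleS !expnS; nia.
  + exact: uniq_glue IH2 Hs.
  + move=> w /mem_glue_inv [u [c [uK cC ->]]].
    case: (C_valid cC) => cs ca; case/andP: (IH3 _ uK) => /eqP us ua.
    by rewrite /valid size_cat us cs all_cat ua ca /m doubleS addn2 eqxx.
  + move=> w /andP[/eqP ws wa].
    rewrite -(cat_take_drop k.*2.+1 w); apply: mem_glue.
    * apply: IH4; rewrite /valid size_take ws /m doubleS ltnS ltnW // eqxx /=.
      by move: wa; rewrite -{1}(cat_take_drop k.*2.+1 w) all_cat => /andP[].
    * have : size (drop k.*2.+1 w) = 2 by rewrite size_drop ws /m doubleS; lia.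
      have : all (fun a => a < q) (drop k.*2.+1 w).
        by move: wa; rewrite -{1}(cat_take_drop k.*2.+1 w) all_cat => /andP[].
      case: (drop _ w) => [|x [|y [|z t]]] //= /and3P[xq yq _] _.
      exact: mem_C.
  + have : 0 < size (KK k) by rewrite IH1 expn_gt0 q_gt0.
    move: IH5; case: (KK k) => [|u0 K'] // pK _.
    exact: sorted_glue.
  + have : 0 < size (KK k) by rewrite IH1 expn_gt0 q_gt0.
    move: IH6 IH1; case: (KK k) => [|u0 K'] //= l0 sz _.
    rewrite last_glue add0n sz sidx_pow // /=.
    case: (D_cons 0) => rest [-> _] /=.
    rewrite /sidx /= nth_C ?nth_C ?q_lt_qq ?muln_gt0 ?q_gt0 // cw0 cwq l0.
    by rewrite map_cat /= /addm /= modn_small.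
Qed.

End Comb.
Section Final.
Variable q' k : nat.
Local Notation q := q'.+1.
Hypothesis hq : 1 < q.
Local Notation m := k.*2.+1.
Local Notation Q := (q ^ m).
Local Notation P := (KK q k).

Definition W i := map (addm q (i %/ Q %% q)) (rcons (nth [::] P (i %% Q)) 0).
Definition Gf i : word q m.+1 := [ffun j : 'I_m.+1 => inord (nth 0 (W i) (nat_of_ord j))].

Lemma Q_gt0 : 0 < Q. Proof. by rewrite expn_gt0. Qed.

Definition Pinv := KK_inv hq k.

Lemma P_size : size P = Q. Proof. by case: Pinv => -[]. Qed.
Lemma P_uniq : uniq P. Proof. by case: Pinv => -[]. Qed.

Lemma nthP_valid r : r < Q -> valid q m (nth [::] P r).
Proof. by case: Pinv => _ H _ _ _ rQ; apply: H; rewrite mem_nth // P_size. Qed.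

Lemma P_all r : all (fun a => a < q) (nth [::] P (r %% Q)).
Proof. by case/andP: (nthP_valid (ltn_pmod r Q_gt0)). Qed.

Lemma P_sz r : size (nth [::] P (r %% Q)) = m.
Proof. by case/andP: (nthP_valid (ltn_pmod r Q_gt0)) => /eqP. Qed.

Lemma W_size i : size (W i) = m.+1.
Proof. by rewrite size_map size_rcons P_sz. Qed.

Lemma W_all i : all (fun a => a < q) (W i).
Proof. by apply/allP => x /mapP [y _ ->]; rewrite ltn_pmod. Qed.

Lemma W_lt i j : nth 0 (W i) j < q.
Proof.
case: (ltnP j (size (W i))) => H; first by apply: (all_nthP 0 (W_all i)).
by rewrite nth_default.
Qed.

Lemma Gf_val i j : (Gf i j : nat) = nth 0 (W i) j.
Proof. by rewrite ffunE inordK // W_lt. Qed.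

Lemma lee_Gf i i' : adj q (W i) (W i') -> lee_dist (Gf i) (Gf i') = 1.
Proof.
move=> H; have := lee_sum_adj hq (W_all i) (W_all i') H; rewrite W_size => <-.
by apply: eq_bigr => j _; rewrite !Gf_val.
Qed.

Lemma divmodQ T r : r < Q -> (T * Q + r) %/ Q = T /\ (T * Q + r) %% Q = r.
Proof.
move=> rQ; split; first by rewrite divnMDl ?Q_gt0 // divn_small // addn0.
by rewrite modnMDl modn_small.
Qed.

Lemma sorted_nthP r : r.+1 < Q -> adj q (nth [::] P r) (nth [::] P r.+1).
Proof.
case: Pinv => -[sz _] _ _ srt _; rewrite -sz; move: srt.
case: P => [|x s] //= /(pathP [::]) H rs; exact: H.
Qed.

Lemma addm_comb t a : addm q (t %% q) (addm q 1 a) = addm q (t.+1 %% q) a.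
Proof. by rewrite /addm modnDm modnDmr; congr (_ %% _); lia. Qed.

Lemma W_adj i : adj q (W i) (W i.+1).
Proof.
have iE := divn_eq i Q; set T := i %/ Q in iE *; set r := i %% Q in iE *.
have rQ : r < Q by rewrite ltn_pmod ?Q_gt0.
have [H|H] : r.+1 < Q \/ r.+1 = Q by lia.
- have [d1 d2] : i.+1 %/ Q = T /\ i.+1 %% Q = r.+1 by rewrite iE -addnS; apply: divmodQ.
  rewrite /W d1 d2 -/T -/r; apply: adj_map; rewrite -!cats1; apply: adj_catr.
  exact: sorted_nthP.
- have [d1 d2] : i.+1 %/ Q = T.+1 /\ i.+1 %% Q = 0.
    by rewrite iE -addnS H -mulSnr -[T.+1 * Q]addn0; apply: divmodQ; rewrite Q_gt0.
  rewrite /W d1 d2 -/T -/r.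
  have -> : nth [::] P r = map (addm q 1) (nth [::] P 0).
    case: Pinv => -[sz _] _ _ _ <-; rewrite -nth_last sz -H //.
  rewrite !map_rcons -map_comp (eq_map (@addm_comb T)).
  apply: adj_rcons_step; rewrite /step /addm !add0n !modn_mod; apply/orP; left.
  by rewrite modnDml addn1.
Qed.

Lemma W_quasi i j : j < m.+1 ->
  nth 0 (W ((i + Q) %% (q * Q))) j = (nth 0 (W i) j + 1) %% q.
Proof.
move=> jm.
have e1 : (i + Q) %% (q * Q) %% Q = i %% Q.
  by rewrite (@modn_dvdm (q * Q) _ Q) ?dvdn_mull // modnDr.
have e2 : (i + Q) %% (q * Q) %/ Q %% q = (i %/ Q).+1 %% q.
  by rewrite -modn_divl modn_mod divnDr // divnn Q_gt0 addn1.
rewrite /W e1 e2.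
have jL : j < size (rcons (nth [::] P (i %% Q)) 0) by rewrite size_rcons P_sz.
rewrite !(nth_map 0) // /addm modnDml [in RHS]addnAC !modnDmr; congr (_ %% _); lia.
Qed.

Lemma W_last i : i < q * Q -> last 0 (W i) = i %/ Q.
Proof.
move=> iq; rewrite /W map_rcons last_rcons /addm add0n !modn_small //.
all: by rewrite ltn_divLR ?Q_gt0 // mulnC.
Qed.

Lemma addm_inj t x y : all (fun a => a < q) x -> all (fun a => a < q) y ->
  map (addm q t) x = map (addm q t) y -> x = y.
Proof.
elim: x y => [|a x IH] [|b y] //= /andP[aq xq] /andP[bq yq] [E /IH -> //].
move/eqP: E; rewrite /addm eqn_modDr !modn_small // => /eqP -> //.
Qed.

Lemma W_inj i i' : i < q * Q -> i' < q * Q -> W i = W i' -> i = i'.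
Proof.
move=> iq i'q E.
have T : i %/ Q = i' %/ Q by rewrite -W_last // E W_last.
move: E; rewrite /W T => E.
have E1 : rcons (nth [::] P (i %% Q)) 0 = rcons (nth [::] P (i' %% Q)) 0.
  by apply: (addm_inj _ _ E); rewrite all_rcons P_all.
have E2 := rcons_injl 0 E1.
have : i %% Q = i' %% Q.
  apply/eqP; rewrite -(nth_uniq [::] _ _ P_uniq) ?P_size ?ltn_pmod ?Q_gt0 //.
  by apply/eqP; exact: E2.
by move=> R; rewrite (divn_eq i Q) (divn_eq i' Q) T R.
Qed.

Lemma Gf_inj i i' : i < q * Q -> i' < q * Q -> Gf i = Gf i' -> i = i'.
Proof.
move=> iq i'q E; apply: W_inj => //.
apply: (@eq_from_nth _ 0); rewrite !W_size // => j jm.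
by rewrite -!(Gf_val _ (Ordinal jm)) E.
Qed.

Lemma Gf_surj (v : word q m.+1) : exists2 i, i < q * Q & Gf i = v.
Proof.
set t : nat := v ord_max.
have tq : t < q by rewrite /t ltn_ord.
set u := [seq (v (inord j) + q - t) %% q | j <- iota 0 m].
have uv : valid q m u.
  rewrite /valid size_map size_iota eqxx andTb; apply/allP => x /mapP [y _ ->].
  by rewrite ltn_pmod.
have uP : u \in P by case: Pinv => _ _ H _ _; apply: H.
set r := index u P.
have rQ : r < Q by rewrite -P_size index_mem.
exists (t * Q + r).
  have : t.+1 * Q <= q * Q by rewrite leq_mul2r tq orbT.
  rewrite mulSnr; lia.
apply/ffunP => j; apply/val_inj; rewrite /= Gf_val /W.
case: (divmodQ t rQ) => -> ->; rewrite nth_index // (modn_small tq).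
have jL : j < size (rcons u 0) by rewrite size_rcons size_map size_iota ltn_ord.
rewrite (nth_map 0) // nth_rcons size_map size_iota /addm.
case: ltnP => jm.
- rewrite (nth_map 0) ?size_iota // nth_iota // add0n.
  have -> : inord j = j by apply: val_inj; rewrite /= inordK.
  rewrite modnDml subnK; last by lia.
  by rewrite modnDr modn_small.
- have jE : j = ord_max by apply: val_inj => /=; have := ltn_ord j; lia.
  by rewrite jE /= eqxx add0n modn_small.
Qed.

End Final.

Theorem corollary1 (q n : nat) :
  3 <= q -> 0 < n -> ~~ odd n ->
  exists G : nat -> word q n, quasi_compl_lee_gray G.
Proof.
move=> q3 n0 ne.
have [k ->] : exists k, n = k.*2.+2.
  exists (n./2).-1; have := odd_double_half n; rewrite (negbTE ne) add0n.
  case: (n./2) => [|h] /=; first by move=> E; move: n0; rewrite -E.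
  by move=> <-; rewrite doubleS.
case: q q3 => [|q'] // q3.
have hq : 1 < q'.+1 by apply: leq_trans q3.
exists (Gf q' k); split.
- move=> v; have [i iq E] := Gf_surj hq v; exists i => //.
- move=> i i' iq i'q; rewrite !inE expnS in iq i'q; exact: Gf_inj.
- move=> i _; apply: lee_Gf => //; exact: W_adj.
- move=> i _ j /=; rewrite (expnS _ k.*2.+1) !Gf_val.
  exact: W_quasi.
Qed.
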